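(* Let $D$ be a CAEXT derivation ending in a configuration $C\neq\mathsf{unsat}$. Then in $C$, for all array terms $a$ and constant array terms $\langle v\rangle$: if $\pi(a,\langle v\rangle)\neq()$, then the formula $$\mathcal R(a,\langle v\rangle)\Rightarrow \forall i{:}\sigma.\ \Big(\bigvee_{k\in I(a,\langle v\rangle)} i\approx k\Big)\vee a[i]\approx v$$ is valid in the theory of extensional constant arrays.
   Context: Theory. Many-sorted first-order logic with equality. There is an index sort $\sigma$, an element sort $\tau$, and an array sort $(\sigma\to\tau)$, with function symbols: read $a[i]$, write $a\langle i\triangleleft u\rangle$, and constant array $\langle v\rangle$. The theory of extensional constant arrays consists of all interpretations satisfying: (row-eq) $\forall a,i,j,u.\ i\approx j\Rightarrow a\langle i\triangleleft u\rangle[j]\approx u$; (row-ne) $\forall a,i,j,u.\ i\not\approx j\Rightarrow a\langle i\triangleleft u\rangle[j]\approx a[j]$; (ext) $\forall a,b.\ a\approx b\Leftrightarrow \forall i.\ a[i]\approx b[i]$; (roc) $\forall i,v.\ \langle v\rangle[i]\approx v$. The empty theory treats all these symbols (and the array sort) as uninterpreted. $T(A)$ is the set of terms occurring in $A$, $T_{\mathcal A}(A)$ the set of array terms in $A$, and $W(A)=\{a\langle i\triangleleft u\rangle[i]\approx u \mid a\langle i\triangleleft u\rangle\in T(A)\}$. Configurations. A configuration is either $\mathsf{unsat}$ or a triple $\langle A,\mathcal I,\pi\rangle$ where $A$ is a set of formulas (with flat literals), $\mathcal I$ is either $\mathcal I_0=\mathsf{none}$ or an interpretation in the empty theory satisfying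 $A$, and $\pi$ maps pairs $(a,t)$ ($a$ an array term, $t$ a read term $b[i]$ or a constant array term $\langle v\rangle$) to either the undefined value $()$ or a pair $(r,c)$ with $r$ a formula and $c$ an array term. $\pi_0$ maps every pair to $()$; the initial configuration for $A$ is $\langle A,\mathcal I_0,\pi_0\rangle$. Reasons. $\mathcal R(a,t)=()$ if $\pi(a,t)=()$; otherwise $\mathcal R(a,t)=\top$ if $t=a$ or $t=a[i]$ for some $i$; otherwise $\mathcal R(a,t)=\mathcal R(c,t)\wedge r$ where $\pi(a,t)=(r,c)$. Updated indices $I(a,\langle v\rangle)$: $()$ if $\pi(a,\langle v\rangle)=()$; $\emptyset$ if $a=\langle v\rangle$; $I(b,\langle v\rangle)\cup\{j\}$ if $\pi(a,\langle v\rangle)=(\top,b)$ with $b=a\langle j\triangleleft u\rangle$ or $a=b\langle j\triangleleft u\rangle$; otherwise $I(c,\langle v\rangle)$ where $\pi(a,\langle v\rangle)=(r,c)$. ''$\mathcal I\models\varphi$'' refers to the current $\mathcal I$ (empty theory); such premises require $\mathcal I\ne\mathcal I_0$. ''Reset'' means $(\mathcal I,\pi):=(\mathcal I_0,\pi_0)$. Rules of CAEXT: Interp: if $\mathcal I=\mathcal I_0$ and $\mathcal I'\models A\cup W(A)$ in the empty theory, set $\mathcal I:=\mathcal I'$. Conf: if $A\cup W(A)$ is empty-theory unsatisfiable, derive $\mathsf{unsat}$. InitR: $a[i]\in T(A)$ ⟹ $\pi(a,a[i]):=(\top,a)$. InitW: $s=a\langle i\triangleleft u\rangle\in T(A)$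 ⟹ $\pi(s,s[i]):=(\top,s)$. RowD: $\mathcal I\models i\not\approx j$, $\pi(a\langle j\triangleleft u\rangle,b[i])\ne()$, $\pi(a,b[i])=()$ ⟹ $\pi(a,b[i]):=(i\not\approx j,a\langle j\triangleleft u\rangle)$. RowU: $\mathcal I\models i\not\approx j$, $a\langle j\triangleleft u\rangle\in T(A)$, $\pi(a,b[i])\ne()$, $\pi(a\langle j\triangleleft u\rangle,b[i])=()$ ⟹ $\pi(a\langle j\triangleleft u\rangle,b[i]):=(i\not\approx j,a)$. EqR: $\mathcal I\models a\approx c$, $a,c\in T_{\mathcal A}(A)$, $a\approx c\in T(A)$, $\pi(a,b[i])\ne()$, $\pi(c,b[i])=()$ ⟹ $\pi(c,b[i]):=(a\approx c,a)$. EqL: symmetric, $\pi(a,b[i]):=(a\approx c,c)$. CongR: $\mathcal I\models i\approx k$, $\pi(a,b[i])\ne()$, $\pi(a,c[k])\ne()$, $\mathcal I\models b[i]\not\approx c[k]$ ⟹ add $\mathcal R(a,b[i])\wedge\mathcal R(a,c[k])\wedge i\approx k\Rightarrow b[i]\approx c[k]$ to $A$, reset. DisEq: $\mathcal I\models a\not\approx c$, $a,c\in T_{\mathcal A}(A)$, $a\approx c\in T(A)$, $k_{\{a,c\}}\notin T(A)$ ⟹ add $a\not\approx c\Rightarrow a[k_{\{a,c\}}]\not\approx c[k_{\{a,c\}}]$ (fresh index constant $k_{\{a,c\}}$), reset. Roc: $\pi(\langle v\rangle,b[i])\ne()$, $\mathcal I\models b[i]\not\approx v$ ⟹ add $\mathcal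 R(\langle v\rangle,b[i])\Rightarrow b[i]\approx v$, reset. InitC: $\langle v\rangle\in T(A)$ ⟹ $\pi(\langle v\rangle,\langle v\rangle):=(\top,\langle v\rangle)$. CowD: $\pi(a\langle j\triangleleft u\rangle,\langle v\rangle)\ne()$, $\pi(a,\langle v\rangle)=()$, $\mathcal I\models\exists i{:}\sigma.\bigwedge_{k\in I(a\langle j\triangleleft u\rangle,\langle v\rangle)\cup\{j\}}i\not\approx k$ ⟹ $\pi(a,\langle v\rangle):=(\top,a\langle j\triangleleft u\rangle)$. CowU: $\pi(a,\langle v\rangle)\ne()$, $\pi(a\langle j\triangleleft u\rangle,\langle v\rangle)=()$, $a\langle j\triangleleft u\rangle\in T(A)$, $\mathcal I\models\exists i{:}\sigma.\bigwedge_{k\in I(a,\langle v\rangle)\cup\{j\}}i\not\approx k$ ⟹ $\pi(a\langle j\triangleleft u\rangle,\langle v\rangle):=(\top,a)$. CEqR: $\mathcal I\models a\approx c$, $a,c\in T_{\mathcal A}(A)$, $a\approx c\in T(A)$, $\pi(a,\langle v\rangle)\ne()$, $\pi(c,\langle v\rangle)=()$ ⟹ $\pi(c,\langle v\rangle):=(a\approx c,a)$. CEqL: symmetric, $\pi(a,\langle v\rangle):=(a\approx c,c)$. CongC: $\pi(a,\langle v\rangle)\ne()$, $\pi(a,\langle w\rangle)\ne()$, $\mathcal I\models v\not\approx w$, $\mathcal I\models\exists i{:}\sigma.\bigwedge_{k\in I(a,\langle v\rangle)\cup I(a,\langle w\rangle)}i\not\approx k$ ⟹ add $\mathcal R(a,\langle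 v\rangle)\wedge\mathcal R(a,\langle w\rangle)\wedge\exists i{:}\sigma.\bigwedge_{k\in I(a,\langle v\rangle)\cup I(a,\langle w\rangle)}i\not\approx k\Rightarrow v\approx w$, reset. Conflict rules: CongR, DisEq, Roc, CongC. A derivation is a sequence of configurations starting from an initial configuration, each obtained from the previous by a rule application. *)

(* Defs.v *)
From Stdlib Require Import List.
Import ListNotations.

(* Many-sorted terms: index sort sigma, element sort tau, array sort.  *)
(* IK a c is the fresh index constant k_{a,c} introduced by DisEq.     *)
Inductive idx : Type :=
| IC : nat -> idx
| IK : arr -> arr -> idx
with elem : Type :=
| EC : nat -> elem
| ERd : arr -> idx -> elem
with arr : Type :=
| AC : nat -> arr
| AWr : arr -> idx -> elem -> arr
| ACst : elem -> arr.

Inductive term : Type := TI : idx -> term | TE : elem -> term | TA : arr -> term.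

(* Quantifier-free formulas, plus the only quantified shape used by the
   calculus: FExNe K  ==  exists i:sigma. /\_{k in K} i <> k. *)
Inductive formula : Type :=
| FTrue | FFalse
| FEqI : idx -> idx -> formula
| FEqE : elem -> elem -> formula
| FEqA : arr -> arr -> formula
| FNot : formula -> formula
| FAnd : formula -> formula -> formula
| FOr : formula -> formula -> formula
| FImp : formula -> formula -> formula
| FExNe : list idx -> formula.

Record interp : Type := {
  Isort : Type; Esort : Type; Asort : Type;
  iC : nat -> Isort; iK : arr -> arr -> Isort;
  eC : nat -> Esort; aC : nat -> Asort;
  rd : Asort -> Isort -> Esort;
  wr : Asort -> Isort -> Esort -> Asort;
  cst : Esort -> Asort }.

Fixpoint evI (M : interp) (i : idx) : Isort M :=
  match i with IC n => iC M n | IK a c => iK M a c end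
with evE (M : interp) (e : elem) : Esort M :=
  match e with EC n => eC M n | ERd a i => rd M (evA M a) (evI M i) end
with evA (M : interp) (a : arr) : Asort M :=
  match a with
  | AC n => aC M n
  | AWr b i u => wr M (evA M b) (evI M i) (evE M u)
  | ACst v => cst M (evE M v)
  end.

Fixpoint sat (M : interp) (f : formula) : Prop :=
  match f with
  | FTrue => True
  | FFalse => False
  | FEqI i j => evI M i = evI M j
  | FEqE e e' => evE M e = evE M e'
  | FEqA a b => evA M a = evA M b
  | FNot g => ~ sat M g
  | FAnd g h => sat M g /\ sat M h
  | FOr g h => sat M g \/ sat M h
  | FImp g h => sat M g -> sat M h
  | FExNe K => exists x : Isort M, forall k, In k K -> x <> evI M k
  end.

Definition cae_model (M : interp) : Prop :=
  (forall a i j u, i = j -> rd M (wr M a i u) j = u) /\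
  (forall a i j u, i <> j -> rd M (wr M a i u) j = rd M a j) /\
  (forall a b, a = b <-> forall i, rd M a i = rd M b i) /\
  (forall i v, rd M (cst M v) i = v).

(* Occurrence of terms: T(A).  IK a c is a constant symbol, so a and c
   are not subterms of it. *)
Fixpoint occI (t : term) (i : idx) : Prop := t = TI i
with occE (t : term) (e : elem) : Prop :=
  t = TE e \/ match e with EC _ => False | ERd a i => occA t a \/ occI t i end
with occA (t : term) (a : arr) : Prop :=
  t = TA a \/ match a with
              | AC _ => False
              | AWr b i u => occA t b \/ occI t i \/ occE t u
              | ACst v => occE t v
              end.

Fixpoint occF (t : term) (f : formula) : Prop :=
  match f with
  | FTrue | FFalse => False
  | FEqI i j => occI t i \/ occI t j
  | FEqE e e' => occE t e \/ occE t e'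
  | FEqA a b => occA t a \/ occA t b
  | FNot g => occF t g
  | FAnd g h | FOr g h | FImp g h => occF t g \/ occF t h
  | FExNe K => exists k, In k K /\ occI t k
  end.

Definition inT (t : term) (A : list formula) : Prop :=
  exists f, In f A /\ occF t f.

Fixpoint atomA (a c : arr) (f : formula) : Prop :=
  match f with
  | FEqA a' c' => a' = a /\ c' = c
  | FNot g => atomA a c g
  | FAnd g h | FOr g h | FImp g h => atomA a c g \/ atomA a c h
  | _ => False
  end.

Definition atomInA (a c : arr) (A : list formula) : Prop :=
  exists f, In f A /\ atomA a c f.

(* M satisfies A ∪ W(A) (empty theory: any interpretation). *)
Definition satAW (M : interp) (A : list formula) : Prop :=
  (forall f, In f A -> sat M f) /\
  (forall a i u, inT (TA (AWr a i u)) A ->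
     sat M (FEqE (ERd (AWr a i u) i) u)).

(* The map pi.  Second components: read terms b[i] or constant arrays <v>. *)
Inductive tgt : Type := TgR : arr -> idx -> tgt | TgC : elem -> tgt.

Definition pimap : Type := arr -> tgt -> option (formula * arr).
Definition pi0 : pimap := fun _ _ => None.

Definition is_self (a : arr) (t : tgt) : Prop :=
  match t with TgR b _ => b = a | TgC v => a = ACst v end.

(* Reasons R(a,t) = r  (relational form of the recursive definition). *)
Inductive Reason (p : pimap) : arr -> tgt -> formula -> Prop :=
| R_base a t : p a t <> None -> is_self a t -> Reason p a t FTrue
| R_step a t r c r' : p a t = Some (r, c) -> ~ is_self a t ->
    Reason p c t r' -> Reason p a t (FAnd r' r).

Definition wr_nb (a b : arr) (j : idx) : Prop :=
  (exists u, b = AWr a j u) \/ (exists u, a = AWr b j u).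

(* Updated indices I(a,<v>) = K  (relational form; lists as finite sets). *)
Inductive Upd (p : pimap) : arr -> elem -> list idx -> Prop :=
| U_self v : p (ACst v) (TgC v) <> None -> Upd p (ACst v) v nil
| U_wr a v b j K : a <> ACst v -> p a (TgC v) = Some (FTrue, b) ->
    wr_nb a b j -> Upd p b v K -> Upd p a v (j :: K)
| U_other a v r c K : a <> ACst v -> p a (TgC v) = Some (r, c) ->
    ~ (r = FTrue /\ exists j, wr_nb a c j) -> Upd p c v K -> Upd p a v K.

(* Configurations; None : option cfg is unsat. *)
Record cfg : Type := mkCfg { cA : list formula; cI : option interp; cpi : pimap }.

Definition initial (A : list formula) : option cfg := Some (mkCfg A None pi0).

Definition upd_pi (p : pimap) (a : arr) (t : tgt) (x : formula * arr) (p' : pimap) : Prop :=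
  p' a t = Some x /\ forall a' t', (a', t') <> (a, t) -> p' a' t' = p a' t'.

Definition holds (C : cfg) (f : formula) : Prop :=
  exists M, cI C = Some M /\ sat M f.

Definition add_reset (C : cfg) (f : formula) : option cfg :=
  Some (mkCfg (f :: cA C) None pi0).

Definition set_pi (C : cfg) (p' : pimap) : option cfg :=
  Some (mkCfg (cA C) (cI C) p').

Inductive step (C : cfg) : option cfg -> Prop :=
| S_Interp M : cI C = None -> satAW M (cA C) ->
    step C (Some (mkCfg (cA C) (Some M) (cpi C)))
| S_Conf : (forall M, ~ satAW M (cA C)) -> step C None
| S_InitR a i p' : inT (TE (ERd a i)) (cA C) ->
    upd_pi (cpi C) a (TgR a i) (FTrue, a) p' -> step C (set_pi C p')
| S_InitW a i u p' : inT (TA (AWr a i u)) (cA C) ->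
    upd_pi (cpi C) (AWr a i u) (TgR (AWr a i u) i) (FTrue, AWr a i u) p' ->
    step C (set_pi C p')
| S_RowD a b i j u p' : holds C (FNot (FEqI i j)) ->
    cpi C (AWr a j u) (TgR b i) <> None -> cpi C a (TgR b i) = None ->
    upd_pi (cpi C) a (TgR b i) (FNot (FEqI i j), AWr a j u) p' ->
    step C (set_pi C p')
| S_RowU a b i j u p' : holds C (FNot (FEqI i j)) ->
    inT (TA (AWr a j u)) (cA C) ->
    cpi C a (TgR b i) <> None -> cpi C (AWr a j u) (TgR b i) = None ->
    upd_pi (cpi C) (AWr a j u) (TgR b i) (FNot (FEqI i j), a) p' ->
    step C (set_pi C p')
| S_EqR a c b i p' : holds C (FEqA a c) ->
    inT (TA a) (cA C) -> inT (TA c) (cA C) -> atomInA a c (cA C) ->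
    cpi C a (TgR b i) <> None -> cpi C c (TgR b i) = None ->
    upd_pi (cpi C) c (TgR b i) (FEqA a c, a) p' -> step C (set_pi C p')
| S_EqL a c b i p' : holds C (FEqA a c) ->
    inT (TA a) (cA C) -> inT (TA c) (cA C) -> atomInA a c (cA C) ->
    cpi C c (TgR b i) <> None -> cpi C a (TgR b i) = None ->
    upd_pi (cpi C) a (TgR b i) (FEqA a c, c) p' -> step C (set_pi C p')
| S_CongR a b c i k r1 r2 : holds C (FEqI i k) ->
    cpi C a (TgR b i) <> None -> cpi C a (TgR c k) <> None ->
    holds C (FNot (FEqE (ERd b i) (ERd c k))) ->
    Reason (cpi C) a (TgR b i) r1 -> Reason (cpi C) a (TgR c k) r2 ->
    step C (add_reset C (FImp (FAnd (FAnd r1 r2) (FEqI i k))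
                              (FEqE (ERd b i) (ERd c k))))
| S_DisEq a c : holds C (FNot (FEqA a c)) ->
    inT (TA a) (cA C) -> inT (TA c) (cA C) -> atomInA a c (cA C) ->
    ~ inT (TI (IK a c)) (cA C) -> ~ inT (TI (IK c a)) (cA C) ->
    step C (add_reset C (FImp (FNot (FEqA a c))
                 (FNot (FEqE (ERd a (IK a c)) (ERd c (IK a c))))))
| S_Roc v b i r : cpi C (ACst v) (TgR b i) <> None ->
    holds C (FNot (FEqE (ERd b i) v)) ->
    Reason (cpi C) (ACst v) (TgR b i) r ->
    step C (add_reset C (FImp r (FEqE (ERd b i) v)))
| S_InitC v p' : inT (TA (ACst v)) (cA C) ->
    upd_pi (cpi C) (ACst v) (TgC v) (FTrue, ACst v) p' -> step C (set_pi C p')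
| S_CowD a j u v K p' : cpi C (AWr a j u) (TgC v) <> None ->
    cpi C a (TgC v) = None -> Upd (cpi C) (AWr a j u) v K ->
    holds C (FExNe (K ++ [j])) ->
    upd_pi (cpi C) a (TgC v) (FTrue, AWr a j u) p' -> step C (set_pi C p')
| S_CowU a j u v K p' : cpi C a (TgC v) <> None ->
    cpi C (AWr a j u) (TgC v) = None -> inT (TA (AWr a j u)) (cA C) ->
    Upd (cpi C) a v K -> holds C (FExNe (K ++ [j])) ->
    upd_pi (cpi C) (AWr a j u) (TgC v) (FTrue, a) p' -> step C (set_pi C p')
| S_CEqR a c v p' : holds C (FEqA a c) ->
    inT (TA a) (cA C) -> inT (TA c) (cA C) -> atomInA a c (cA C) ->
    cpi C a (TgC v) <> None -> cpi C c (TgC v) = None ->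
    upd_pi (cpi C) c (TgC v) (FEqA a c, a) p' -> step C (set_pi C p')
| S_CEqL a c v p' : holds C (FEqA a c) ->
    inT (TA a) (cA C) -> inT (TA c) (cA C) -> atomInA a c (cA C) ->
    cpi C c (TgC v) <> None -> cpi C a (TgC v) = None ->
    upd_pi (cpi C) a (TgC v) (FEqA a c, c) p' -> step C (set_pi C p')
| S_CongC a v w K1 K2 r1 r2 : cpi C a (TgC v) <> None ->
    cpi C a (TgC w) <> None -> holds C (FNot (FEqE v w)) ->
    Upd (cpi C) a v K1 -> Upd (cpi C) a w K2 ->
    holds C (FExNe (K1 ++ K2)) ->
    Reason (cpi C) a (TgC v) r1 -> Reason (cpi C) a (TgC w) r2 ->
    step C (add_reset C (FImp (FAnd (FAnd r1 r2) (FExNe (K1 ++ K2)))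
                              (FEqE v w))).

Inductive derives : option cfg -> option cfg -> Prop :=
| D_refl x : derives x x
| D_step C y z : step C y -> derives y z -> derives (Some C) z.

Definition cae_valid_inv (r : formula) (K : list idx) (a : arr) (v : elem) : Prop :=
  forall M : interp, cae_model M -> sat M r ->
    forall x : Isort M, (exists k, In k K /\ x = evI M k) \/ rd M (evA M a) x = evE M v.

(* Main.v *)
Require Import Defs.
From Stdlib Require Import List Classical.
Import ListNotations.

Definition Inv (p : pimap) : Prop := forall a v, p a (TgC v) <> None ->
 (forall r c, p a (TgC v) = Some (r,c) -> p c (TgC v) <> None) /\
 (exists r, Reason p a (TgC v) r) /\ (exists K, Upd p a v K) /\
 (forall r K, Reason p a (TgC v) r -> Upd p a v K -> cae_valid_inv r K a v).

Lemma reason_tr (p1 p2 : pimap) t (Q : arr -> Prop) :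
 (forall x r c, Q x -> ~ is_self x t -> p1 x t = Some (r,c) -> p2 x t = Some (r,c) /\ Q c) ->
 (forall x, Q x -> is_self x t -> p1 x t <> None -> p2 x t <> None) ->
 forall x r, Reason p1 x t r -> Q x -> Reason p2 x t r.
Proof.
  intros H1 H2 x r HR. induction HR; intros HQ.
  - apply R_base; auto.
  - destruct (H1 _ _ _ HQ H0 H) as [E Qc]. eapply R_step; eauto.
Qed.

Lemma upd_tr (p1 p2 : pimap) v (Q : arr -> Prop) :
 (forall x r c, Q x -> x <> ACst v -> p1 x (TgC v) = Some (r,c) -> p2 x (TgC v) = Some (r,c) /\ Q c) ->
 (Q (ACst v) -> p1 (ACst v) (TgC v) <> None -> p2 (ACst v) (TgC v) <> None) ->
 forall x K, Upd p1 x v K -> Q x -> Upd p2 x v K.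
Proof.
  intros H1 H2 x K HU. remember v as w eqn:Ew. induction HU; subst; intros HQ.
  - apply U_self; auto.
  - destruct (H1 _ _ _ HQ H H0) as [E Qc]. eapply U_wr; eauto.
  - destruct (H1 _ _ _ HQ H H0) as [E Qc]. eapply U_other; eauto.
Qed.

Lemma tr_both (p p' : pimap) v :
  (forall x, p x (TgC v) <> None -> x <> ACst v -> p' x (TgC v) = p x (TgC v)) ->
  (forall x, p x (TgC v) <> None -> p' x (TgC v) <> None) ->
  (forall x r c, p x (TgC v) = Some (r,c) -> p c (TgC v) <> None) ->
  (forall x r, Reason p x (TgC v) r -> p x (TgC v) <> None -> Reason p' x (TgC v) r) /\
  (forall x r, Reason p' x (TgC v) r -> p x (TgC v) <> None -> Reason p x (TgC v) r) /\
  (forall x K, Upd p x v K -> p x (TgC v) <> None -> Upd p' x v K) /\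
  (forall x K, Upd p' x v K -> p x (TgC v) <> None -> Upd p x v K).
Proof.
  intros Hag Hdef HI1. split; [|split; [|split]].
  - apply reason_tr with (Q := fun y => p y (TgC v) <> None).
    + intros x r c Qx Hs E. rewrite Hag; auto. split; auto. eapply HI1; eauto.
    + intros x Qx _ _. auto.
  - apply reason_tr with (Q := fun y => p y (TgC v) <> None).
    + intros x r c Qx Hs E. rewrite Hag in E; auto. split; auto. eapply HI1; eauto.
    + intros x Qx _ _. auto.
  - apply upd_tr with (Q := fun y => p y (TgC v) <> None).
    + intros x r c Qx Hs E. rewrite Hag; auto. split; auto. eapply HI1; eauto.
    + intros Qx _. auto.
  - apply upd_tr with (Q := fun y => p y (TgC v) <> None).
    + intros x r c Qx Hs E. rewrite Hag in E; auto. split; auto. eapply HI1; eauto.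
    + intros Qx _. auto.
Qed.

Lemma Inv_ext (p p' : pimap) : Inv p -> (forall x v, p' x (TgC v) = p x (TgC v)) -> Inv p'.
Proof.
  intros HI E a v Hd. rewrite E in Hd.
  assert (HI1 : forall x r c, p x (TgC v) = Some (r,c) -> p c (TgC v) <> None).
  { intros x r c Ex. assert (p x (TgC v) <> None) by congruence.
    destruct (HI x v H) as [H1 _]. eauto. }
  destruct (tr_both p p' v (fun x _ _ => E x v)) as [T1 [T2 [T3 T4]]]; auto.
  { intros x. rewrite E. auto. }
  destruct (HI a v Hd) as [H1 [[r Hr] [[K HK] H4]]].
  split; [|split; [|split]].
  - intros r0 c Ec. rewrite E in Ec |- *. eauto.
  - exists r; auto.
  - exists K; auto.
  - intros r0 K0 R0 U0. apply H4; auto.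
Qed.

Lemma Inv_pi0 : Inv pi0.
Proof. intros a v H. exfalso. apply H. reflexivity. Qed.

Lemma Inv_A (p p' : pimap) a0 v0 r0 c0 :
  Inv p -> a0 = ACst v0 -> upd_pi p a0 (TgC v0) (r0, c0) p' ->
  (c0 = a0 \/ p c0 (TgC v0) <> None) -> Inv p'.
Proof.
  intros HI -> [E0 Eo] Hc.
  assert (Ep : forall x v, (x, TgC v) <> (ACst v0, TgC v0) -> p' x (TgC v) = p x (TgC v)).
  { intros; apply Eo; auto. }
  intros a v Hd.
  destruct (classic ((a, TgC v) = (ACst v0, TgC v0))) as [Eq|Ne].
  - injection Eq as -> ->. split; [|split; [|split]].
    + intros r c Ec. rewrite E0 in Ec. injection Ec as <- <-.
      destruct Hc as [->|Hc]; [congruence|].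
      destruct (classic ((c0, TgC v0) = (ACst v0, TgC v0))) as [Eq'|Ne'].
      * injection Eq' as ->. congruence.
      * rewrite Ep; auto.
    + exists FTrue. apply R_base; simpl; auto.
    + exists nil. apply U_self; auto.
    + intros r K HR HU.
      inversion HR; subst; [| exfalso; apply H0; reflexivity].
      inversion HU; subst; try congruence.
      intros M HM _ x. right. destruct HM as [_ [_ [_ Hc']]]. simpl. apply Hc'.
  - rewrite Ep in Hd; auto.
    assert (HI1 : forall x r c, p x (TgC v) = Some (r,c) -> p c (TgC v) <> None).
    { intros x r c Ex. assert (p x (TgC v) <> None) by congruence.
      destruct (HI x v H) as [H1 _]. eauto. }
    destruct (tr_both p p' v) as [T1 [T2 [T3 T4]]]; auto.
    { intros x _ Hx. apply Ep. intro Q. injection Q as -> ->. auto. }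
    { intros x Hx. destruct (classic ((x, TgC v) = (ACst v0, TgC v0))) as [Q|Q].
      - injection Q as -> ->. congruence.
      - rewrite Ep; auto. }
    destruct (HI a v Hd) as [H1 [[r Hr] [[K HK] H4]]].
    split; [|split; [|split]].
    + intros r0' c Ec. rewrite Ep in Ec; auto.
      destruct (classic ((c, TgC v) = (ACst v0, TgC v0))) as [Q|Q].
      * injection Q as -> ->. congruence.
      * rewrite Ep; eauto.
    + exists r; auto.
    + exists K; auto.
    + intros r1 K1 R1 U1. apply H4; auto.
Qed.

Lemma upd_inv p a v K : Upd p a v K -> a <> ACst v -> exists r c, p a (TgC v) = Some (r,c) /\
  ((r = FTrue /\ exists j K', wr_nb a c j /\ Upd p c v K' /\ K = j :: K') \/
   (~ (r = FTrue /\ exists j, wr_nb a c j) /\ Upd p c v K)).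
Proof.
  intros HU Hn. destruct HU.
  - congruence.
  - exists FTrue, b. split; auto. left. split; auto. exists j, K; auto.
  - exists r, c. split; auto.
Qed.

Lemma Inv_B (p p' : pimap) a0 v0 r0 c0 :
  Inv p -> a0 <> ACst v0 -> p a0 (TgC v0) = None ->
  upd_pi p a0 (TgC v0) (r0, c0) p' -> p c0 (TgC v0) <> None ->
  (forall r' K', Reason p c0 (TgC v0) r' -> Upd p c0 v0 K' -> cae_valid_inv r' K' c0 v0 ->
    (forall j, r0 = FTrue -> wr_nb a0 c0 j -> cae_valid_inv (FAnd r' r0) (j :: K') a0 v0) /\
    (~ (r0 = FTrue /\ exists j, wr_nb a0 c0 j) -> cae_valid_inv (FAnd r' r0) K' a0 v0)) ->
  Inv p'.
Proof.
  intros HI Hns Hn [E0 Eo] Hc Hsem.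
  assert (Ep : forall x v, p x (TgC v) <> None -> p' x (TgC v) = p x (TgC v)).
  { intros x v Hx; apply Eo. intro Q. injection Q as -> ->. auto. }
  assert (HI1 : forall v x r c, p x (TgC v) = Some (r,c) -> p c (TgC v) <> None).
  { intros v x r c Ex. assert (p x (TgC v) <> None) by congruence.
    destruct (HI x v H) as [H1 _]. eauto. }
  assert (TB : forall v, (forall x r, Reason p x (TgC v) r -> p x (TgC v) <> None -> Reason p' x (TgC v) r) /\
  (forall x r, Reason p' x (TgC v) r -> p x (TgC v) <> None -> Reason p x (TgC v) r) /\
  (forall x K, Upd p x v K -> p x (TgC v) <> None -> Upd p' x v K) /\
  (forall x K, Upd p' x v K -> p x (TgC v) <> None -> Upd p x v K)).
  { intro v. apply tr_both; eauto.
    intros x Hx. rewrite Ep; auto. }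
  intros a v Hd.
  destruct (classic ((a, TgC v) = (a0, TgC v0))) as [Eq|Ne].
  - injection Eq as -> ->. destruct (TB v0) as [T1 [T2 [T3 T4]]].
    destruct (HI c0 v0 Hc) as [_ [[rc Hrc] [[Kc HKc] Hv]]].
    split; [|split; [|split]].
    + intros r c Ec. rewrite E0 in Ec. injection Ec as <- <-. rewrite Ep; auto.
    + exists (FAnd rc r0). eapply R_step; eauto.
    + destruct (classic (r0 = FTrue /\ exists j, wr_nb a0 c0 j)) as [[-> [j Hj]]|Hno].
      * exists (j :: Kc). eapply U_wr; eauto.
      * exists Kc. eapply U_other; eauto.
    + intros r K HR HU.
      inversion HR; subst; [exfalso; apply Hns; exact H0|].
      rewrite E0 in H. injection H as <- <-.
      apply T2 in H1; auto.
      destruct (upd_inv _ _ _ _ HU Hns) as [r1 [c1 [Ec1 [[Er [j [K' [Hw [HU' ->]]]]]|[Hno HU']]]]];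
        rewrite E0 in Ec1; injection Ec1 as Ea Eb; subst; apply T4 in HU'; auto;
        specialize (Hsem _ _ H1 HU' (Hv _ _ H1 HU')).
      * apply (proj1 Hsem); auto.
      * apply (proj2 Hsem); auto.
  - assert (Hd' : p a (TgC v) <> None).
    { rewrite <- Eo; auto. }
    destruct (TB v) as [T1 [T2 [T3 T4]]].
    destruct (HI a v Hd') as [H1 [[r Hr] [[K HK] H4]]].
    split; [|split; [|split]].
    + intros r' c Ec. rewrite Ep in Ec; auto. rewrite Ep; eauto.
    + exists r; auto.
    + exists K; auto.
    + intros r1 K1 R1 U1. apply H4; auto.
Qed.

Lemma arr_nocyc : forall a j u j' u', a <> AWr (AWr a j u) j' u'.
Proof.
  induction a; intros j u j' u' H; try discriminate.
  injection H as H1 _ _. eapply IHa; eauto.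
Qed.

Lemma wr_nb_D a j u j' : wr_nb a (AWr a j u) j' -> j' = j.
Proof.
  intros [[u' H]|[u' H]].
  - injection H; auto.
  - exfalso. eapply arr_nocyc; eauto.
Qed.

Lemma wr_nb_U a j u j' : wr_nb (AWr a j u) a j' -> j' = j.
Proof.
  intros [[u' H]|[u' H]].
  - exfalso. eapply arr_nocyc; eauto.
  - injection H; auto.
Qed.

Lemma sem_D a j u v r' K' : cae_valid_inv r' K' (AWr a j u) v ->
  cae_valid_inv (FAnd r' FTrue) (j :: K') a v.
Proof.
  intros H M HM [Hr _] x. destruct (H M HM Hr x) as [[k [Hk Ek]]|Hx].
  - left. exists k. simpl; auto.
  - destruct (classic (x = evI M j)) as [Ej|Nj].
    + left. exists j. simpl; auto.
    + right. destruct HM as [_ [Hne _]]. simpl in Hx. rewrite Hne in Hx; auto.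
Qed.

Lemma sem_U a j u v r' K' : cae_valid_inv r' K' a v ->
  cae_valid_inv (FAnd r' FTrue) (j :: K') (AWr a j u) v.
Proof.
  intros H M HM [Hr _] x. destruct (H M HM Hr x) as [[k [Hk Ek]]|Hx].
  - left. exists k. simpl; auto.
  - destruct (classic (x = evI M j)) as [Ej|Nj].
    + left. exists j. simpl; auto.
    + right. destruct HM as [_ [Hne _]]. simpl. rewrite Hne; auto.
Qed.

Lemma sem_Eq a c v r' K' (f : formula) : (forall M, sat M f -> evA M a = evA M c) ->
  cae_valid_inv r' K' c v -> cae_valid_inv (FAnd r' f) K' a v.
Proof.
  intros Hf H M HM [Hr Hf'] x. rewrite (Hf M Hf'). apply H; auto.
Qed.

Definition InvO (y : option cfg) : Prop :=
  match y with None => True | Some C => Inv (cpi C) end.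

Lemma upd_R (p p' : pimap) a b i x : upd_pi p a (TgR b i) x p' ->
  forall y v, p' y (TgC v) = p y (TgC v).
Proof. intros [_ Eo] y v. apply Eo. discriminate. Qed.

Lemma step_inv C y : step C y -> Inv (cpi C) -> InvO y.
Proof.
  intros Hs HI. destruct Hs; simpl in *; try exact Inv_pi0; try exact I.
  - exact HI.
  - eapply Inv_ext; eauto using upd_R.
  - eapply Inv_ext; eauto using upd_R.
  - eapply Inv_ext; eauto using upd_R.
  - eapply Inv_ext; eauto using upd_R.
  - eapply Inv_ext; eauto using upd_R.
  - eapply Inv_ext; eauto using upd_R.
  - eapply Inv_A; eauto.
  -
    destruct (classic (a = ACst v)) as [Ea|Na].
    + eapply Inv_A; eauto.
    + eapply Inv_B; eauto.
      intros r' K' _ _ Hv. split.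
      * intros j' _ Hw. pose proof (wr_nb_D _ _ _ _ Hw) as Ej; subst j'. apply sem_D with (u := u); auto.
      * intros Hn. exfalso. apply Hn. split; auto. exists j. left. exists u. reflexivity.
  -
    eapply Inv_B; eauto; try discriminate.
    intros r' K' _ _ Hv. split.
    * intros j' _ Hw. pose proof (wr_nb_U _ _ _ _ Hw) as Ej; subst j'. apply sem_U; auto.
    * intros Hn. exfalso. apply Hn. split; auto. exists j. right. exists u. reflexivity.
  -
    destruct (classic (c = ACst v)) as [Ea|Na].
    + eapply Inv_A; eauto.
    + eapply Inv_B; eauto.
      intros r' K' _ _ Hv. split.
      * intros j' Hc _. discriminate.
      * intros _. apply sem_Eq with (c := a); [intros M HM; simpl in HM; symmetry; exact HM | exact Hv].
  -
    destruct (classic (a = ACst v)) as [Ea|Na].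
    + eapply Inv_A; eauto.
    + eapply Inv_B; eauto.
      intros r' K' _ _ Hv. split.
      * intros j' Hc _. discriminate.
      * intros _. apply sem_Eq with (c := c); [intros M HM; exact HM | exact Hv].
Qed.

Lemma derives_inv x y : derives x y -> InvO x -> InvO y.
Proof.
  intros H. induction H; auto.
  intros HC. apply IHderives. eapply step_inv; eauto.
Qed.

Theorem mainTheorem6 (A0 : list formula) (C : cfg) :
  derives (initial A0) (Some C) ->
  forall (a : arr) (v : elem), cpi C a (TgC v) <> None ->
    (exists r, Reason (cpi C) a (TgC v) r) /\
    (exists K, Upd (cpi C) a v K) /\
    (forall r K, Reason (cpi C) a (TgC v) r -> Upd (cpi C) a v K ->
       cae_valid_inv r K a v).
Proof.
  intros HD a v Hd.
  assert (HI : Inv (cpi C)) by (apply (derives_inv _ _ HD); exact Inv_pi0).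
  destruct (HI a v Hd) as [_ H]. exact H.
Qed.
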